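(* Let $\mathbf X\in\mathbb R^n$ be a random vector with $\|\mathbf X\|_\infty\le1$ and $\|\mathbf X\|_1\le s$ almost surely, with mean $\boldsymbol\mu^*$ and covariance matrix $\boldsymbol\Sigma^*$, and let $\nu^*_i=\mathbb E|X_i|$. Let $\mathcal A$ be a family of subsets of $[n]$ and $m=\max\{|A|:A\in\mathcal A\}$. Then for every $A\in\mathcal A$ and every $i\in[n]$, $$\sum_{j\in A}0\vee\Sigma^*_{ij}\le 2\nu^*_i(s\wedge m).$$
   Context: $\boldsymbol\Sigma^*=\mathbb E[(\mathbf X-\boldsymbol\mu^* )(\mathbf X-\boldsymbol\mu^* )^{\mathsf T}]$; $a\vee b=\max(a,b)$, $a\wedge b=\min(a,b)$. *)

(* Defs.v *)
From mathcomp Require Import all_boot all_order all_algebra.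
From mathcomp Require Import all_classical all_reals all_analysis.

(* Main.v *)
Require Import Defs.
From mathcomp Require Import all_boot all_order all_algebra.
From mathcomp Require Import all_classical all_reals all_analysis.
From mathcomp Require Import measurable_realfun.
Import Order.TTheory GRing.Theory Num.Theory.
Local Open Scope ring_scope.
Local Open Scope classical_set_scope.
Local Open Scope ereal_scope.
Local Open Scope ring_scope.

Lemma tr_int d (T : measurableType d) (R : realType) (P : probability T R)
  (N : set T) (mN : measurable N) (PN : P N = 0%E) (g : T -> R)
  (mg : measurable_fun setT g) (M : R)
  (hM : forall w, ~ N w -> `|g w| <= M) :
  P.-integrable (setT `\` N) (EFin \o g) /\
  (\int[P]_w (g w)%:E = \int[P]_(w in setT `\` N) (g w)%:E)%E.
Proof.
have mG : measurable (setT `\` N) by exact: measurableD.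
have iG : P.-integrable (setT `\` N) (EFin \o g).
  apply: measurable_bounded_integrable => //.
  - by rewrite (le_lt_trans (probability_le1 P mG)) // ltry.
  - exact: measurable_funS mg.
  - exists M; split; first exact: num_real.
    move=> x Mx y [_ Ny]; by rewrite /= (le_trans (hM y Ny)) // ltW.
split => //.
have iT : P.-integrable setT (EFin \o g).
  apply/(negligible_integrable mN measurableT _ PN); last exact: iG.
  exact/measurable_EFinP.
exact: (negligible_integral mN measurableT iT PN).
Qed.

Lemma sub_sum (R : realDomainType) (I : finType) (p q : pred I) (F : I -> R) :
  (forall i, 0 <= F i) -> (forall i, p i -> q i) ->
  \sum_(i | p i) F i <= \sum_(i | q i) F i.
Proof.
move=> F0 pq; rewrite big_mkcond [leRHS]big_mkcond; apply: ler_sum => i _.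
case: ifP => pi; first by rewrite (pq _ pi).
by case: ifP.
Qed.

Theorem lemma1 (d : measure_display) (T : measurableType d) (R : realType)
  (P : probability T R) (n : nat) (X : 'I_n -> {RV P >-> R}) (s : R)
  (hinf : {ae P, forall w, forall i : 'I_n, `|X i w| <= 1})
  (hone : {ae P, forall w, \sum_(i < n) `|X i w| <= s})
  (fam : {set {set 'I_n}}) :
  let m := (\max_(B in fam) #|B|)%N in
  forall (A : {set 'I_n}), A \in fam -> forall i : 'I_n,
  (\sum_(j in A) maxe 0%E (covariance P (X i) (X j))
     <= 2%:E * 'E_P[fun w => (`|X i w|)%R] * (Order.min s m%:R)%R%:E)%E.
Proof.
move=> m A Am i.
have : {ae P, forall w, (forall i : 'I_n, `|X i w| <= 1) /\ \sum_(i < n) `|X i w| <= s}.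
  by apply: filterS2 hinf hone => w h1 h2; split.
case=> N [mN PN HN].
have Gb w : ~ N w -> (forall k, `|X k w| <= 1) /\ \sum_(k < n) `|X k w| <= s.
  by move=> Nw; apply: contrapT => h; apply: Nw; apply: HN.
set G := setT `\` N.
have mG : measurable G by exact: measurableD.
have PG1 : P G = 1%E.
  rewrite /G measureD // ?setTI ?PN.
  - transitivity (1 - 0 : \bar R)%E; last by rewrite sube0.
    by congr (_ - _)%E; [exact: probability_setT | exact: PN].
  - by apply: (le_lt_trans (probability_le1 P measurableT)); exact: ltey.
have [w0 Gw0] : exists w, G w.
  apply: contrapT => h.
  have G0 : G = set0 by apply/seteqP; split => // w Gw; apply: h; exists w.
  by move: PG1; rewrite G0 measure0 => /eqP; rewrite eq_sym eqe oner_eq0.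
have mX k : measurable_fun setT (X k) by exact: measurable_funPT.
pose mu k := fine 'E_P[X k].
have trX k := @tr_int _ _ _ P N mN PN _ (mX k) 1 (fun w Nw => (Gb w Nw).1 k).
have EG k : 'E_P[X k] = (\int[P]_(w in G) (X k w)%:E)%E.
  by rewrite unlock; exact: (trX k).2.
have Emu k : (\int[P]_(w in G) (X k w)%:E)%E = (mu k)%:E.
  by rewrite /mu EG fineK // integrable_fin_num // (trX k).1.
pose a w := X i w - mu i.
have ma : measurable_fun setT a.
  by apply: measurable_funB => //; exact: measurable_cst.
have ba w : ~ N w -> `|a w| <= 1 + `|mu i|.
  by move=> Nw; rewrite (le_trans (ler_normB _ _)) // lerD2r (Gb w Nw).1.
have trA := @tr_int _ _ _ P N mN PN _ ma _ ba.
have Ia0 : (\int[P]_(w in G) (a w)%:E)%E = 0%E.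
  have ic : P.-integrable G (EFin \o (fun _ : T => mu i)).
    exact: (@tr_int _ _ _ P N mN PN (fun _ => mu i) (measurable_cst (mu i)) `|mu i| (fun w _ => lexx _)).1.
  rewrite /a; under eq_integral do rewrite EFinB.
  rewrite integralB_EFin //; last exact: (trX i).1.
  rewrite Emu.
  have := integral_cst P mG (mu i)%:E; rewrite /= PG1 mule1 => ->.
  by rewrite subee.
have nb : forall x y M1 M2 : R, `|x| <= M1 -> `|y| <= M2 -> `|x * y| <= M1 * M2.
  move=> x y M1 M2 hx hy; rewrite normrM ler_pM //.
have ia j : P.-integrable G (EFin \o (fun w => a w * X j w)).
  have mf : measurable_fun setT (fun w => a w * X j w) by apply: measurable_funM.
  exact: (@tr_int _ _ _ P N mN PN _ mf _ (fun w Nw => nb _ _ _ _ (ba w Nw) ((Gb w Nw).1 j))).1.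
have ima j : P.-integrable G (EFin \o (fun w => mu j * a w)).
  have mf : measurable_fun setT (fun w => mu j * a w).
    by apply: measurable_funM => //; exact: measurable_cst.
  exact: (@tr_int _ _ _ P N mN PN _ mf _ (fun w Nw => nb _ _ _ _ (lexx `|mu j|) (ba w Nw))).1.
have covE j : covariance P (X i) (X j) = (\int[P]_(w in G) (a w * X j w)%:E)%E.
  have bj w : ~ N w -> `|X j w - mu j| <= 1 + `|mu j|.
    by move=> Nw; rewrite (le_trans (ler_normB _ _)) // lerD2r (Gb w Nw).1.
  have mf : measurable_fun setT (fun w => a w * (X j w - mu j)).
    apply: measurable_funM => //; apply: measurable_funB => //.
  have expE (f : T -> R) : 'E_P[f] = (\int[P]_w (f w)%:E)%E by rewrite unlock.
  transitivity (\int[P]_w (a w * (X j w - mu j))%:E)%E.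
    by rewrite covariance.unlock expE.
  rewrite (@tr_int _ _ _ P N mN PN _ mf _ (fun w Nw => nb _ _ _ _ (ba w Nw) (bj w Nw))).2.
  under eq_integral => w _ do rewrite mulrBr EFinB (mulrC (a w) (mu j)).
  rewrite integralB_EFin //.
  have -> : (\int[P]_(w in G) (mu j * a w)%:E)%E = 0%E.
    under eq_integral do rewrite EFinM.
    by rewrite integralZl // ?Ia0 ?mule0 //; exact: trA.1.
  by rewrite sube0.
pose D j := (\int[P]_(w in G) (a w * X j w)%:E)%E.
pose K := Order.min s m%:R.
have s0 : 0 <= s.
  apply: le_trans (Gb w0 Gw0.2).2; apply: sumr_ge0 => k _; exact: normr_ge0.
have K0 : 0 <= K by rewrite /K le_min s0 ler0n.
have bS w : ~ N w -> forall (Q : pred 'I_n), `|\sum_(j in A | Q j) X j w| <= K.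
  move=> Nw Q; apply: le_trans (ler_norm_sum _ _ _) _.
  rewrite /K le_min; apply/andP; split.
    apply: le_trans (Gb w Nw).2.
    by apply: sub_sum => // k; exact: normr_ge0.
  apply: (@le_trans _ _ (\sum_(j in A) 1)).
    apply: le_trans (@sub_sum _ _ _ (fun j => j \in A) _ _ _) _.
    - by move=> k; exact: normr_ge0.
    - by move=> k /andP[].
    by apply: ler_sum => k _; exact: (Gb w Nw).1.
  by rewrite sumr_const ler_nat; exact: leq_bigmax_cond.
have step1 : (\sum_(j in A) maxe 0%E (covariance P (X i) (X j)) =
    \sum_(j in A | (0 <= D j)%E) D j)%E.
  rewrite big_mkcondr /=; apply: eq_bigr => j _; rewrite covE -/(D j).
  case: ifP => h; first exact: max_r.
  apply: max_l; move/negbT: h; rewrite -ltNge; exact: ltW.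
have step2 := @integral_sum _ _ _ P G mG _ (fun j w => (a w * X j w)%:E) ia
   (index_enum 'I_n) (fun j => (j \in A) && (0 <= D j)%E).
rewrite step1 -step2.
have iaK : P.-integrable G (EFin \o (fun w => `|a w| * K)).
  have mf : measurable_fun setT (fun w => `|a w| * K).
    by apply: measurable_funM => //; exact: measurableT_comp.
  apply: (@tr_int _ _ _ P N mN PN _ mf ((1 + `|mu i|) * `|K|) _).1.
  by move=> w Nw; apply: nb => //; rewrite normr_id; exact: ba.
apply: (@le_trans _ _ (\int[P]_(w in G) (`|a w| * K)%:E)%E).
  apply: le_integral => //.
    by apply: integrable_sum => // j _; exact: ia.
  move=> w /set_mem [_ Nw]; rewrite sumEFin lee_fin -mulr_sumr.
  rewrite (le_trans (ler_norm _)) // normrM ler_wpM2l //; exact: bS.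
have iabs : P.-integrable G (EFin \o (fun w => `|a w|)).
  exact: (integrable_norm trA.1).
under eq_integral do rewrite EFinM.
rewrite integralZr //.
apply: lee_wpmul2r; first by rewrite lee_fin.
have mXa : measurable_fun setT (fun w => `|X i w|) by exact: measurableT_comp.
have bN w : ~ N w -> `| `|X i w| | <= 1 by move=> Nw; rewrite normr_id; exact: (Gb w Nw).1.
have trN := @tr_int _ _ _ P N mN PN _ mXa 1 bN.
have ->: 'E_P[fun w => `|X i w|] = (\int[P]_(w in G) (`|X i w|)%:E)%E.
  by rewrite unlock; exact: trN.2.
have nufin := integrable_fin_num mG trN.1.
set nu := (\int[P]_(w in G) (`|X i w|)%:E)%E in nufin *.
have hmu : (`|mu i|%:E <= nu)%E.
  rewrite -abse_EFin -Emu /nu.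
  under [X in (_ <= X)%E]eq_integral do rewrite -abse_EFin.
  apply: le_abse_integral => //; exact/measurable_EFinP/(measurable_funS _ _ (mX i)).
have ic : P.-integrable G (EFin \o (fun _ : T => `|mu i|)).
  have bc w : ~ N w -> `| `|mu i| | <= `|mu i| by rewrite normr_id.
  exact: (@tr_int _ _ _ P N mN PN (fun _ => `|mu i|) (measurable_cst _) `|mu i| bc).1.
apply: (@le_trans _ _ (\int[P]_(w in G) (`|X i w| + `|mu i|)%:E)%E).
  apply: le_integral => //.
    have mf : measurable_fun setT (fun w => `|X i w| + `|mu i|).
      by apply: measurable_funD => //; exact: measurable_cst.
    have bf w : ~ N w -> `| `|X i w| + `|mu i| | <= 1 + `|mu i|.
      by move=> Nw; rewrite (ger0_norm (addr_ge0 (normr_ge0 _) (normr_ge0 _))) lerD2r (Gb w Nw).1.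
    exact: (@tr_int _ _ _ P N mN PN _ mf _ bf).1.
  by move=> w _; rewrite lee_fin ler_normB.
under eq_integral do rewrite EFinD.
rewrite (integralD mG trN.1 ic).
have := integral_cst P mG `|mu i|%:E; rewrite /= PG1 mule1 => ->.
rewrite -/nu; apply: (@le_trans _ _ (nu + nu)%E); first by rewrite leeD2l.
rewrite -(fineK nufin) -EFinD -EFinM lee_fin.
by rewrite -mulr2n mulr_natl.
Qed.
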